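(* Let $\mathcal A,\mathcal B$ be nondeterministic parity tree automata over $\Sigma$ (all states productive) with $L(\mathcal A)\cap L(\mathcal B)=\emptyset$. Then there is a function $\mathcal P:\bigcup_{a\in\Sigma}\Delta^\mathcal A(a)\times\Delta^\mathcal B(a)\to\{\mathsf L,\mathsf R\}$ with the following property: for every path $b=(a_0,d_0)(a_1,d_1)\cdots\in(\Sigma\times\{\mathsf L,\mathsf R\})^\omega$ and all sequences $\vec\delta^\mathcal A=\delta^\mathcal A_0\delta^\mathcal A_1\cdots\in\Delta^\mathcal A(b)$ and $\vec\delta^\mathcal B=\delta^\mathcal B_0\delta^\mathcal B_1\cdots\in\Delta^\mathcal B(b)$, if $\mathcal P(\delta^\mathcal A_i,\delta^\mathcal B_i)=d_i$ for every $i\in\omega$, then at least one of $\vec\delta^\mathcal A$, $\vec\delta^\mathcal B$ is rejecting.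
   Context: A nondeterministic parity tree automaton $(\Sigma,Q,q_0,\Omega,\Delta)$ has $\Omega:Q\to\mathbb N$ and $\Delta\subseteq Q\times\Sigma\times Q\times Q$; it accepts a tree $t:\{\mathsf L,\mathsf R\}^*\to\Sigma$ if there is a run $\rho$ with $\rho(\epsilon)=q_0$, $(\rho(u),t(u),\rho(u\mathsf L),\rho(u\mathsf R))\in\Delta$ for all $u$, such that on every branch the maximal priority seen infinitely often is even. $L(\cdot)$ is the recognised language; all states are assumed productive (each state accepts some tree when used as initial state). $\Delta(a)$ is the set of transitions over letter $a$. The priority of a transition $(q,a,q_\mathsf L,q_\mathsf R)$ is $\Omega(q)$; an infinite sequence of transitions is accepting iff the maximal priority occurring infinitely often is even, and rejecting otherwise. For a path $b=(a_0,d_0)(a_1,d_1)\cdots$, $\Delta(b)$ is the set of sequences $\delta_0\delta_1\cdots$ with $\delta_i=(q_i,a_i,q_{\mathsf L,i},q_{\mathsf R,i})\in\Delta$, $q_0$ the initial state, and $q_{i+1}=q_{d_i,i}$ for all $i$. *)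

(* Defs.v *)
From mathcomp Require Import all_boot.
Set Implicit Arguments. Unset Strict Implicit. Unset Printing Implicit Defensive.

Inductive dir := DL | DR.

Record npta (Sigma : finType) := NPTA {
  state : finType;
  init : state;
  prio : state -> nat;
  delta : state -> Sigma -> state -> state -> Prop
}.

Definition parity_accepting (f : nat -> nat) : Prop :=
  exists m, ~~ odd m /\ (forall N, exists i, N <= i /\ f i = m)
            /\ (exists N, forall i, N <= i -> f i <= m).

Definition tree (Sigma : Type) := seq dir -> Sigma.

Definition is_run Sigma (A : npta Sigma) (q : state A) (t : tree Sigma)
  (rho : seq dir -> state A) : Prop :=
  rho [::] = q /\
  forall u, delta (rho u) (t u) (rho (rcons u DL)) (rho (rcons u DR)).

Definition accepting_run Sigma (A : npta Sigma) (rho : seq dir -> state A) : Prop :=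
  forall beta : nat -> dir,
    parity_accepting (fun n => prio (rho (mkseq beta n))).

Definition accepts_from Sigma (A : npta Sigma) (q : state A) (t : tree Sigma) : Prop :=
  exists rho, is_run q t rho /\ accepting_run rho.

Definition accepts Sigma (A : npta Sigma) (t : tree Sigma) : Prop :=
  accepts_from (init A) t.

Definition all_productive Sigma (A : npta Sigma) : Prop :=
  forall q : state A, exists t, accepts_from q t.

Record trans Sigma (A : npta Sigma) := Trans {
  tsrc : state A; tlet : Sigma; tL : state A; tR : state A }.

Definition trans_prio Sigma (A : npta Sigma) (d : trans A) : nat := prio (tsrc d).

Definition delta_seq Sigma (A : npta Sigma) (b : nat -> Sigma * dir)
  (ds : nat -> trans A) : Prop :=
  tsrc (ds 0) = init A /\
  forall i,
    delta (tsrc (ds i)) (tlet (ds i)) (tL (ds i)) (tR (ds i)) /\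
    tlet (ds i) = (b i).1 /\
    tsrc (ds i.+1) = (if (b i).2 is DL then tL (ds i) else tR (ds i)).

Definition trans_seq_accepting Sigma (A : npta Sigma) (ds : nat -> trans A) : Prop :=
  parity_accepting (fun i => trans_prio (ds i)).

Definition trans_seq_rejecting Sigma (A : npta Sigma) (ds : nat -> trans A) : Prop :=
  ~ trans_seq_accepting ds.

(* Main.v *)
Require Import Defs.
From mathcomp Require Import all_boot zify.
From Stdlib Require Import ClassicalEpsilon Classical.
Set Implicit Arguments. Unset Strict Implicit. Unset Printing Implicit Defensive.

Lemma parity_ext (f g : nat -> nat) : (forall n, f n = g n) ->
  parity_accepting f -> parity_accepting g.
Proof.
move=> E [m [em [io [N ev]]]]; exists m; split=> //; split.
- move=> N'; have [i [Hi fi]] := io N'; exists i; rewrite -E; done.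
- by exists N => i Hi; rewrite -E; apply: ev.
Qed.

Lemma parity_shift (f : nat -> nat) c : parity_accepting f ->
  parity_accepting (fun k => f (k + c)).
Proof.
move=> [m [em [io [N ev]]]]; exists m; split=> //; split.
- move=> N'; have [i [Hi fi]] := io (N' + c); exists (i - c); split; first lia.
  by rewrite subnK //; lia.
- by exists N => i Hi; apply: ev; lia.
Qed.

Lemma parity_unshift (f : nat -> nat) c :
  parity_accepting (fun k => f (k + c)) -> parity_accepting f.
Proof.
move=> [m [em [io [N ev]]]]; exists m; split=> //; split.
- move=> N'; have [i [Hi fi]] := io N'; exists (i + c); split=> //; lia.
- exists (N + c) => i Hi; have := ev (i - c); rewrite subnK; last lia.
  by apply; lia.
Qed.

Lemma parity_shuffle (f g1 g2 c1 c2 : nat -> nat) :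
  (forall n, f n = g1 (c1 n) \/ f n = g2 (c2 n)) ->
  (forall K, exists N, forall n, N <= n -> K <= c1 n /\ K <= c2 n) ->
  (forall k, exists n, k <= n /\ f n = g1 k.+1) ->
  (forall k, exists n, k <= n /\ f n = g2 k.+1) ->
  parity_accepting g1 -> parity_accepting g2 -> parity_accepting f.
Proof.
move=> Hf Hc H1 H2 [m1 [em1 [io1 [N1 ev1]]]] [m2 [em2 [io2 [N2 ev2]]]].
have Hev : exists N, forall i, N <= i -> f i <= maxn m1 m2.
  have [N HN] := Hc (maxn N1 N2); exists N => i Hi.
  have [c1i c2i] := HN i Hi.
  case: (Hf i) => ->.
  - by apply: leq_trans (ev1 _ _) (leq_maxl _ _); lia.
  - by apply: leq_trans (ev2 _ _) (leq_maxr _ _); lia.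
case: (leqP m1 m2) => hm.
- exists m2; split=> //; split; last by case: Hev => N HN; exists N => i /HN; rewrite (maxn_idPr hm).
  move=> N; have [[|k] [Hk gk]] := io2 N.+1; first by [].
  have [n [Hn fn]] := H2 k.
  by exists n; split; [lia | rewrite fn].
- exists m1; split=> //; split; last first.
    by case: Hev => N HN; exists N => i /HN; rewrite (maxn_idPl (ltnW hm)).
  move=> N; have [[|k] [Hk gk]] := io1 N.+1; first by [].
  have [n [Hn fn]] := H1 k.
  by exists n; split; [lia | rewrite fn].
Qed.

Section Game.
Variables (X M : Type) (en : X -> M -> Prop) (nxt : M -> dir -> X) (pr1 pr2 : X -> nat).

Definition cond (p : nat -> X) := parity_accepting (fun n => pr1 (p n)) /\
  parity_accepting (fun n => pr2 (p n)).

Lemma cond_ext p q : (forall n, p n = q n) -> cond p -> cond q.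
Proof. by move=> E [H1 H2]; split; [apply: parity_ext H1 | apply: parity_ext H2] => n; rewrite E. Qed.

Lemma cond_shift p c : cond p -> cond (fun k => p (k + c)).
Proof. by case=> H1 H2; split; [exact: (@parity_shift (fun n => pr1 (p n)) c H1) | exact: (@parity_shift (fun n => pr2 (p n)) c H2)]. Qed.

Lemma cond_unshift p c : cond (fun k => p (k + c)) -> cond p.
Proof. by case=> H1 H2; split; [exact: (@parity_unshift (fun n => pr1 (p n)) c H1) | exact: (@parity_unshift (fun n => pr2 (p n)) c H2)]. Qed.

Definition allowed (D : M -> option dir) m d :=
  match D m with None => True | Some d' => d = d' end.

Definition pos (x : X) (tau : seq dir -> M) (u : seq dir) : X :=
  match u with [::] => x | d :: u' => nxt (tau u') d end.

Fixpoint cons_h D (tau : seq dir -> M) (u : seq dir) : Prop :=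
  match u with [::] => True | d :: u' => cons_h D tau u' /\ allowed D (tau u') d end.

Definition step D tau (h : nat -> seq dir) :=
  forall n, exists d, h n.+1 = d :: h n /\ allowed D (tau (h n)) d.

Definition winning D tau x :=
  forall h, h 0 = [::] -> step D tau h -> cond (fun n => pos x tau (h n)).

Definition valid D tau x := forall u, cons_h D tau u -> en (pos x tau u) (tau u).

Definition adam_wins D x := exists tau, valid D tau x /\ winning D tau x.

Definition eve_wins (P : M -> dir) x := forall (ms : nat -> M) (xs : nat -> X), xs 0 = x ->
  (forall i, en (xs i) (ms i) /\ xs i.+1 = nxt (ms i) (P (ms i))) -> ~ cond xs.

Definition Q D := exists P, (forall m, allowed D m (P m)) /\
  forall x, eve_wins P x \/ adam_wins D x.

Lemma cons_drop D tau u k : cons_h D tau u -> cons_h D tau (drop k u).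
Proof.
elim: u k => [|d u IH] [|k] //=.
by case=> /IH.
Qed.

Lemma step_cons D tau h : cons_h D tau (h 0) -> step D tau h -> forall n, cons_h D tau (h n).
Proof.
move=> c0 st; elim=> // n IH; have [d [-> a]] := st n; by split.
Qed.

Lemma win_from D tau x : winning D tau x ->
  forall h, cons_h D tau (h 0) -> step D tau h -> cond (fun n => pos x tau (h n)).
Proof.
move=> W h c0 st.
set u := h 0; set L := size u.
pose H n := if n <= L then drop (L - n) u else h (n - L).
have H0 : H 0 = [::] by rewrite /H leq0n subn0 drop_size.
have HS : step D tau H.
  move=> n; rewrite /H.
  have [hn|[hn|hn]] : n < L \/ L < n \/ n = L by lia.
  - have -> : n.+1 <= L by [].
    rewrite (ltnW hn).
    have hl : L - n.+1 < size u by rewrite /L; lia.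
    exists (nth DL u (L - n.+1)).
    have E : L - n = (L - n.+1).+1 by lia.
    have Hd := drop_nth DL hl.
    rewrite E -Hd; split=> //.
    by move: (cons_drop (L - n.+1) c0); rewrite Hd => -[].
  - have -> : (n.+1 <= L) = false by lia.
    have -> : (n <= L) = false by lia.
    have [d [E a]] := st (n - L); exists d; split=> //.
    by have -> : n.+1 - L = (n - L).+1 by lia.
  - subst n; rewrite leqnn ltnn subnn drop0 subSnn.
    exact: st 0.
have := W H H0 HS => /(cond_shift L); apply: cond_ext => k.
rewrite /H; case: k => [|k]; first by rewrite add0n leqnn subnn drop0.
have -> : (k.+1 + L <= L) = false by lia.
by rewrite addnK.
Qed.

Definition upd (D : M -> option dir) (m0 : M) (o : option dir) : M -> option dir :=
  fun m => if excluded_middle_informative (m = m0) then o else D m.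

Lemma upd_eq D m0 o : upd D m0 o m0 = o.
Proof. by rewrite /upd; case: excluded_middle_informative. Qed.

Lemma upd_neq D m0 o m : m <> m0 -> upd D m0 o m = D m.
Proof. by rewrite /upd; case: excluded_middle_informative. Qed.

Lemma Q_base D : (forall m, D m <> None) -> Q D.
Proof.
move=> HD.
pose P m := match D m with Some d => d | None => DL end.
exists P; split; first by move=> m; rewrite /allowed /P; case: (D m).
move=> x; case: (excluded_middle_informative (eve_wins P x)) => hE; first by left.
right.
have [ms [xs [h0 [hp hc]]]] : exists ms xs, xs 0 = x /\
   (forall i, en (xs i) (ms i) /\ xs i.+1 = nxt (ms i) (P (ms i))) /\ cond xs.
  apply: NNPP => nE; apply: hE => ms xs h0 hp hc; apply: nE.
  by exists ms, xs.
pose tau (u : seq dir) := ms (size u).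
have Hpos : forall u, cons_h D tau u -> pos x tau u = xs (size u).
  elim=> [|d u IH] //= [cu al].
  have := hp (size u) => -[_ ->]; rewrite /tau.
  move: al; rewrite /allowed /P /tau; case E: (D (ms (size u))) => [d'|] //.
    by move=> ->.
  by have := HD (ms (size u)); rewrite E.
exists tau; split.
  by move=> u cu; rewrite Hpos //; exact: (hp _).1.
move=> h h0' st.
have cs : forall n, cons_h D tau (h n) by apply: step_cons => //; rewrite h0'.
have sz : forall n, size (h n) = n.
  elim=> [|n IH]; first by rewrite h0'.
  by have [d [-> _]] := st n; rewrite /= IH.
by apply: cond_ext hc => n; rewrite Hpos // sz.
Qed.

Lemma allowed_upd D m0 o m d : m <> m0 -> allowed (upd D m0 o) m d <-> allowed D m d.
Proof. by move=> ne; rewrite /allowed upd_neq. Qed.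

Lemma allowed_weak D m0 o m d : D m0 = None -> allowed (upd D m0 o) m d -> allowed D m d.
Proof.
move=> N; case: (excluded_middle_informative (m = m0)) => [->|ne].
  by rewrite /allowed N.
by move/(allowed_upd _ _ _ ne).
Qed.

Lemma Q_eve D m0 e P : D m0 = None ->
  (forall m, allowed (upd D m0 (Some e)) m (P m)) ->
  (forall x, eve_wins P x \/ adam_wins (upd D m0 (Some e)) x) ->
  eve_wins P (nxt m0 e) -> Q D.
Proof.
set De := upd D m0 (Some e) => N HP HQ Hy.
exists P; split; first by move=> m; apply: (allowed_weak N (HP m)).
move=> x; case: (HQ x) => [|[tau [V W]]]; first by left.
right.
have never : forall u, cons_h De tau u -> tau u <> m0.
  move=> u cu Eu.
  pose ext k := iter k (fun w => P (tau w) :: w) u.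
  have st : step De tau ext by move=> n; exists (P (tau (ext n))); split.
  have cs := step_cons (h := ext) cu st.
  have := win_from W cu st => /(cond_shift 1).
  apply: (Hy (fun k => tau (ext (k + 1)))).
    rewrite /= /ext /= Eu; congr nxt.
    by have := HP m0; rewrite /allowed /De upd_eq.
  move=> i; split; first by apply: V; apply: cs.
  by rewrite !addn1.
have cD : forall u, cons_h D tau u -> cons_h De tau u.
  elim=> [|d u IH] //= [cu al]; have cu' := IH cu; split=> //.
  by apply/(allowed_upd _ _ _ (never _ cu')).
exists tau; split; first by move=> u /cD /V.
move=> h h0 st; apply: W => //.
have cs : forall n, cons_h De tau (h n).
  elim=> [|n IH]; first by rewrite h0.
  have [d [-> al]] := st n; split=> //.
  by apply/(allowed_upd _ _ _ (never _ IH)).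
move=> n; have [d [E al]] := st n; exists d; split=> //.
by apply/(allowed_upd _ _ _ (never _ (cs n))).
Qed.

Section Adapt.
Variables (D2 : M -> option dir) (m0 : M) (tau2 : seq dir -> M).
Hypothesis HD2 : D2 m0 = Some DR.
Definition tau' (w : seq dir) : M := if w is [::] then m0 else tau2 (take (size w).-1 w).

Lemma tau'_rcons w : tau' (rcons w DR) = tau2 w.
Proof.
case: w => [|d w] //=.
by rewrite size_rcons /= -cats1 take_size_cat.
Qed.

Lemma cons'_rcons w : cons_h D2 tau' (rcons w DR) <-> cons_h D2 tau2 w.
Proof.
elim: w => [|d w IH] /=; first by rewrite /allowed HD2.
by rewrite tau'_rcons; split=> -[/IH ? ?].
Qed.

Lemma pos'_rcons z w : pos z tau' (rcons w DR) = pos (nxt m0 DR) tau2 w.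
Proof. by case: w => [|d w] //=; rewrite tau'_rcons. Qed.

Lemma cons'_ne w : cons_h D2 tau' w -> w <> [::] -> exists w', w = rcons w' DR.
Proof.
elim: w => [|d w IH] //= [cw al] _.
case: w IH cw al => [|d' w] IH cw al.
  by exists [::]; move: al; rewrite /= /allowed HD2 => ->.
have [w' E] := IH cw ltac:(done).
by exists (d :: w'); rewrite E.
Qed.

Lemma adapt_valid z : valid D2 tau2 (nxt m0 DR) ->
  forall w, cons_h D2 tau' w -> w <> [::] -> en (pos z tau' w) (tau' w).
Proof.
move=> V w cw ne; have [w' E] := cons'_ne cw ne; subst w.
rewrite tau'_rcons pos'_rcons; apply: V; exact/cons'_rcons.
Qed.

Lemma adapt_win z : winning D2 tau2 (nxt m0 DR) -> winning D2 tau' z.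
Proof.
move=> W h h0 st.
have cs : forall n, cons_h D2 tau' (h n) by apply: step_cons => //; rewrite h0.
have cl : forall n, exists w, h n.+1 = rcons w DR.
  move=> n; apply: cons'_ne (cs _) _; have [d [-> _]] := st n; done.
pose hh n := take (size (h n.+1)).-1 (h n.+1).
have hhE : forall n, h n.+1 = rcons (hh n) DR.
  by move=> n; have [w E] := cl n; rewrite /hh E size_rcons /= -cats1 take_size_cat // cats1.
have hh0 : hh 0 = [::].
  by rewrite /hh; have [d [-> _]] := st 0; rewrite h0.
have sth : step D2 tau2 hh.
  move=> k; have [d [E al]] := st k.+1.
  exists d; split.
    by apply: (rcons_injl DR); rewrite -hhE E hhE.
  by move: al; rewrite hhE tau'_rcons.
have := W hh hh0 sth => C.
apply: (cond_unshift (c := 1)); apply: cond_ext C => n.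
by rewrite addn1 hhE pos'_rcons.
Qed.
End Adapt.

Lemma branch_of (L : nat -> seq dir) (inc : nat -> bool) :
  L 0 = [::] ->
  (forall n, exists d, L n.+1 = if inc n.+1 then d :: L n else L n) ->
  (forall N, exists n, N <= n /\ inc n) ->
  exists H : nat -> seq dir,
   [/\ H 0 = [::],
       (forall k, exists n d, H k.+1 = d :: H k /\ L n = H k.+1),
       (forall n, L n = H (size (L n))),
       (forall k, exists n, k <= n /\ inc n.+1 /\ L n.+1 = H k.+1) &
       (forall K, exists N, forall n, N <= n -> K <= size (L n))].
Proof.
move=> L0 Ls Linf.
have sS : forall n, size (L n.+1) = size (L n) + inc n.+1.
  by move=> n; have [d ->] := Ls n; case: (inc n.+1); rewrite /= ?addn1 ?addn0.
have mono : forall n m, n <= m -> size (L n) <= size (L m).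
  move=> n m /subnK <-; elim: (m - n) => [|k IH] //=.
  by rewrite addSn sS; apply: leq_trans IH (leq_addr _ _).
have sle : forall n, size (L n) <= n.
  by elim=> [|n IH]; rewrite ?L0 // sS; case: (inc n.+1); lia.
have chain : forall n m, n <= m -> L n = drop (size (L m) - size (L n)) (L m).
  move=> n m /subnK <-; elim: (m - n) => [|k IH]; first by rewrite add0n subnn drop0.
  rewrite addSn; have [d E] := Ls (k + n); rewrite E.
  case: (inc (k + n).+1) => /=; last exact: IH.
  have le := mono n (k + n) (leq_addl _ _).
  by rewrite subSn //.
have same : forall n m, size (L n) = size (L m) -> L n = L m.
  move=> n m E; case: (leqP n m) => nm.
    by rewrite (chain _ _ nm) E subnn drop0.
  by rewrite (chain _ _ (ltnW nm)) E subnn drop0.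
have unb : forall K, exists n, K <= size (L n).
  elim=> [|K [n Hn]]; first by exists 0.
  have [n' [Hn' i']] := Linf n.+1; case: n' Hn' i' => [|n'] // Hn' i'.
  exists n'.+1; rewrite sS i' addn1 ltnS; apply: leq_trans Hn (mono _ _ _); lia.
have ivt : forall m k, k < size (L m) ->
    exists n, [/\ n < m, size (L n) = k, inc n.+1 & size (L n.+1) = k.+1].
  elim=> [|m IH] k; first by rewrite L0.
  case: (ltnP k (size (L m))) => hk; first by case/IH: hk => n [? ? ? ?]; exists n; split=> //; lia.
  rewrite sS => hk'.
  have ki : inc m.+1 by move: hk'; case: (inc m.+1); rewrite ?addn0 //; lia.
  exists m; split=> //; first lia.
  by rewrite sS ki addn1; congr S; lia.
have exk : forall k, exists n, size (L n) == k.
  case=> [|k]; first by exists 0; rewrite L0.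
  have [m Hm] := unb k.+1.
  have [n [_ _ _ Hn]] := ivt m k Hm; by exists n.+1; apply/eqP.
pose H k := L (xchoose (exk k)).
have sH : forall k, size (H k) = k by move=> k; apply/eqP; exact: (xchooseP (exk k)).
have LH : forall n, L n = H (size (L n)) by move=> n; apply: same; rewrite sH.
exists H; split.
- by apply: size0nil; rewrite sH.
- move=> k; set p := xchoose (exk k.+1).
  have Hp : size (L p) = k.+1 by apply/eqP; exact: (xchooseP (exk k.+1)).
  have [n [np Hn _ _]] := ivt p k ltac:(by rewrite Hp).
  have Ln := chain _ _ (ltnW np); rewrite Hp Hn subSnn in Ln.
  exists p; move: Ln; rewrite /H -/p.
  case E: (L p) => [|d t]; first by move: Hp; rewrite E.
  move=> /= Ln; rewrite drop0 in Ln; exists d; split=> //.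
  congr cons; rewrite -Ln; apply: same; rewrite Hn.
  by have := sH k.
- exact: LH.
- move=> k; have [m Hm] := unb k.+1.
  have [n [_ Hn i Hn1]] := ivt m k Hm.
  exists n; split; [rewrite -Hn; exact: sle | split=> //].
  by rewrite LH Hn1.
- move=> K; have [n Hn] := unb K; exists n => m nm; exact: leq_trans Hn (mono _ _ nm).
Qed.

Section Comb.
Variables (D : M -> option dir) (m0 : M) (tau1 tau2 : seq dir -> M) (x z : X).
Hypothesis HD : D m0 = None.
Let D1 := upd D m0 (Some DL).
Let D2 := upd D m0 (Some DR).
Hypothesis V1 : valid D1 tau1 x.
Hypothesis W1 : winning D1 tau1 x.
Hypothesis T2 : tau2 [::] = m0.
Hypothesis V2 : forall w, cons_h D2 tau2 w -> w <> [::] -> en (pos z tau2 w) (tau2 w).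
Hypothesis W2 : winning D2 tau2 z.

Definition scf (s : bool * seq dir * seq dir) : M :=
  let: (mo, a, b) := s in if mo then tau1 a else tau2 b.

Definition stf (d : dir) (s : bool * seq dir * seq dir) : bool * seq dir * seq dir :=
  let: (mo, a, b) := s in
  if (if excluded_middle_informative (scf s = m0)
      then (if d is DL then true else false) else mo)
  then (true, d :: a, b) else (false, a, d :: b).

Fixpoint st (u : seq dir) : bool * seq dir * seq dir :=
  match u with [::] => (true, [::], [::]) | d :: u' => stf d (st u') end.

Definition sc u := scf (st u).

Definition InvP (s : bool * seq dir * seq dir) (p : X) := let: (mo, a, b) := s in
  [/\ cons_h D1 tau1 a, cons_h D2 tau2 b &
  (if mo then pos x tau1 a = p /\ tau2 b = m0
   else [/\ b <> [::], pos z tau2 b = p & tau1 a = m0])].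

Lemma D1m0 : D1 m0 = Some DL. Proof. exact: upd_eq. Qed.
Lemma D2m0 : D2 m0 = Some DR. Proof. exact: upd_eq. Qed.

Lemma invP_step s p d : InvP s p -> allowed D (scf s) d -> InvP (stf d s) (nxt (scf s) d).
Proof.
case: s => [[mo a] b]; rewrite /InvP /stf /scf => -[c1 c2 H] al.
case: excluded_middle_informative => [E|NE].
- have ta : tau1 a = m0 by case: mo E H al => /= E H; [rewrite E | case: H].
  have tb : tau2 b = m0 by case: mo E H al => /= E H; [case: H | rewrite E].
  rewrite /= E.
  case: d al => al; split=> //=.
  + by split=> //; rewrite /allowed ta D1m0.
  + by rewrite ta.
  + by split=> //; rewrite /allowed tb D2m0.
  + by rewrite tb.
- case: mo NE H al => NE H al /=; split=> //=.
  + by split=> //; apply/(allowed_upd _ _ _ NE).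
  + by case: H.
  + by split=> //; apply/(allowed_upd _ _ _ NE).
  + by case: H => _ _ ->.
Qed.

Lemma inv_all u : cons_h D sc u -> InvP (st u) (pos x sc u).
Proof.
elim: u => [|d u IH]; first by rewrite /InvP /= T2.
move=> [/IH I al]; exact: (invP_step I al).
Qed.

Lemma comb_valid : valid D sc x.
Proof.
move=> u /inv_all; rewrite /sc.
case: (st u) => [[mo a] b] /= [c1 c2 H].
case: mo H => [[<- _]|[ne <- _]]; first exact: V1.
exact: V2.
Qed.

Lemma comb_win : winning D sc x.
Proof.
move=> h h0 stp.
have cs : forall n, cons_h D sc (h n) by apply: step_cons => //; rewrite h0.
pose mo n := (st (h n)).1.1.
pose a n := (st (h n)).1.2.
pose b n := (st (h n)).2.
pose f n := pos x sc (h n).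
have S : forall n, exists d, a n.+1 = (if mo n.+1 then d :: a n else a n) /\
                             b n.+1 = (if mo n.+1 then b n else d :: b n).
  move=> n; have [d [E _]] := stp n; exists d; rewrite /a /b /mo E /=.
  case: (st (h n)) => [[m' a'] b']; rewrite /stf; by case: ifP.
have ca : forall n, cons_h D1 tau1 (a n).
  move=> n; have := inv_all (cs n); rewrite /a; case: (st (h n)) => [[m' a'] b'] /=.
  by case.
have cb : forall n, cons_h D2 tau2 (b n).
  move=> n; have := inv_all (cs n); rewrite /b; case: (st (h n)) => [[m' a'] b'] /=.
  by case.
have fm1 : forall n, mo n -> f n = pos x tau1 (a n).
  move=> n; have := inv_all (cs n); rewrite /a /mo /f; case: (st (h n)) => [[m' a'] b'] /=.
  by case=> _ _; case: m' => // -[-> _].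
have fm2 : forall n, ~~ mo n -> f n = pos z tau2 (b n).
  move=> n; have := inv_all (cs n); rewrite /b /mo /f; case: (st (h n)) => [[m' a'] b'] /=.
  by case=> _ _; case: m' => // -[_ -> _].
have a0 : a 0 = [::] by rewrite /a h0.
have b0 : b 0 = [::] by rewrite /b h0.
case: (excluded_middle_informative (forall N, exists n, N <= n /\ mo n)) => inf1; last first.
  have [N HN] : exists N, forall n, N <= n -> ~~ mo n.
    apply: NNPP => nH; apply: inf1 => N; apply: NNPP => nE; apply: nH.
    exists N => n Nn; apply/negP => m; apply: nE; by exists n.
  pose h' k := b (k + N).
  have st' : step D2 tau2 h'.
    move=> k; have [d [_ E]] := S (k + N); exists d.
    have nm : ~~ mo (k + N).+1 by apply: HN; lia.
    rewrite /h' addSn E (negbTE nm); split=> //.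
    by have := cb (k + N).+1; rewrite E (negbTE nm) => -[].
  have C : cond (fun n => pos z tau2 (h' n)) by apply: (win_from W2 _ st'); apply: cb.
  apply: (cond_unshift (c := N)); apply: cond_ext C => k.
  by symmetry; apply: fm2; apply: HN; lia.
case: (excluded_middle_informative (forall N, exists n, N <= n /\ ~~ mo n)) => inf2; last first.
  have [N HN] : exists N, forall n, N <= n -> mo n.
    apply: NNPP => nH; apply: inf2 => N; apply: NNPP => nE; apply: nH.
    exists N => n Nn; apply: NNPP => m; apply: nE; exists n; split=> //; exact/negP.
  pose h' k := a (k + N).
  have st' : step D1 tau1 h'.
    move=> k; have [d [E _]] := S (k + N); exists d.
    have nm : mo (k + N).+1 by apply: HN; lia.
    rewrite /h' addSn E nm; split=> //.
    by have := ca (k + N).+1; rewrite E nm => -[].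
  have C : cond (fun n => pos x tau1 (h' n)) by apply: (win_from W1 _ st'); apply: ca.
  apply: (cond_unshift (c := N)); apply: cond_ext C => k.
  by symmetry; apply: fm1; apply: HN; lia.
have [H1 [H10 H1s LH1 H1i H1e]] := @branch_of a mo a0
  ltac:(by move=> n; have [d [E _]] := S n; exists d) inf1.
have [H2 [H20 H2s LH2 H2i H2e]] := @branch_of b (fun n => ~~ mo n) b0
  ltac:(by move=> n; have [d [_ E]] := S n; exists d; rewrite if_neg) inf2.
have C1 : cond (fun k => pos x tau1 (H1 k)).
  apply: W1 => // k; have [n [d [E1 E2]]] := H1s k; exists d; split=> //.
  by have := ca n; rewrite E2 E1 => -[].
have C2 : cond (fun k => pos z tau2 (H2 k)).
  apply: W2 => // k; have [n [d [E1 E2]]] := H2s k; exists d; split=> //.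
  by have := cb n; rewrite E2 E1 => -[].
have gen : forall pr : X -> nat,
    parity_accepting (fun k => pr (pos x tau1 (H1 k))) ->
    parity_accepting (fun k => pr (pos z tau2 (H2 k))) ->
    parity_accepting (fun n => pr (f n)).
  move=> pr P1 P2.
  apply: (parity_shuffle (c1 := fun n => size (a n)) (c2 := fun n => size (b n)) _ _ _ _ P1 P2).
  - move=> n; case Mo: (mo n).
      by left; rewrite fm1 // -LH1.
    by right; rewrite fm2 ?Mo // -LH2.
  - move=> K; have [N1 HN1] := H1e K; have [N2 HN2] := H2e K.
    exists (maxn N1 N2) => n Hn; split; [apply: HN1 | apply: HN2]; lia.
  - move=> k; have [n [kn [i E]]] := H1i k; exists n.+1; split; first lia.
    by rewrite fm1 // E.
  - move=> k; have [n [kn [i E]]] := H2i k; exists n.+1; split; first lia.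
    by rewrite fm2 // E.
by case: C1 C2 => P1 Q1 [P2 Q2]; split; apply: gen.
Qed.

Lemma comb_adam : adam_wins D x.
Proof. exists sc; split; [exact: comb_valid | exact: comb_win]. Qed.
End Comb.

Fixpoint mem_l (m : M) (l : seq M) : Prop :=
  match l with [::] => False | a :: l' => a = m \/ mem_l m l' end.

Lemma Q_ind (l : seq M) : forall D, (forall m, D m = None -> mem_l m l) -> Q D.
Proof.
elim: l => [|m0 l IH] D HD.
  by apply: Q_base => m E; exact: HD m E.
case E: (D m0) => [e|].
  apply: IH => m Em; case: (HD m Em) => // Hm; subst m.
  by rewrite E in Em.
have Hi : forall o m, upd D m0 (Some o) m = None -> mem_l m l.
  move=> o m; case: (excluded_middle_informative (m = m0)) => [->|ne].
    by rewrite upd_eq.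
  by rewrite upd_neq // => /HD [Hm|] //; case: ne.
have [P1 [HP1 Q1]] := IH _ (Hi DL).
have [P2 [HP2 Q2]] := IH _ (Hi DR).
case: (excluded_middle_informative (eve_wins P2 (nxt m0 DR))) => ew.
  exact: (Q_eve E HP2 Q2 ew).
have [tau2 [V2 W2]] : adam_wins (upd D m0 (Some DR)) (nxt m0 DR) by case: (Q2 (nxt m0 DR)).
exists P1; split; first by move=> m; apply: (allowed_weak E (HP1 m)).
move=> x; case: (Q1 x) => [|[tau1 [V1 W1]]]; first by left.
right.
apply: (@comb_adam D m0 tau1 (tau' m0 tau2) x x V1 W1 erefl).
  by apply: adapt_valid => //; rewrite upd_eq.
by apply: adapt_win => //; rewrite upd_eq.
Qed.


End Game.

Lemma mem_l_map (T : eqType) (M : Type) (f : T -> M) (s : seq T) y :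
  y \in s -> mem_l (f y) (map f s).
Proof.
elim: s => [|a s IH] //=; rewrite in_cons => /orP [/eqP ->|/IH]; by [left | right].
Qed.

Lemma cons_none (X M : Type) (tau : seq dir -> M) u : cons_h (fun _ : M => None) tau u.
Proof. by elim: u => //= d u ->. Qed.

Unset Implicit Arguments.
Theorem mainTheorem4 (Sigma : finType) (A B : npta Sigma) :
  all_productive A -> all_productive B ->
  (forall t : tree Sigma, ~ (accepts A t /\ accepts B t)) ->
  exists P : trans A -> trans B -> dir,
    forall (b : nat -> Sigma * dir) (dA : nat -> trans A) (dB : nat -> trans B),
      delta_seq b dA -> delta_seq b dB ->
      (forall i, P (dA i) (dB i) = (b i).2) ->
      trans_seq_rejecting dA \/ trans_seq_rejecting dB.
Proof.
move=> _ _ Hdis.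
pose X := (state A * state B)%type.
pose M := (trans A * trans B)%type.
pose en (p : X) (m : M) := [/\ tsrc m.1 = p.1, tsrc m.2 = p.2,
   delta (tsrc m.1) (tlet m.1) (tL m.1) (tR m.1),
   delta (tsrc m.2) (tlet m.2) (tL m.2) (tR m.2) & tlet m.1 = tlet m.2].
pose nxt (m : M) (d : dir) : X := if d is DL then (tL m.1, tL m.2) else (tR m.1, tR m.2).
pose pr1 (p : X) := prio p.1.
pose pr2 (p : X) := prio p.2.
pose encA (q : state A * Sigma * state A * state A) := @Trans Sigma A q.1.1.1 q.1.1.2 q.1.2 q.2.
pose encB (q : state B * Sigma * state B * state B) := @Trans Sigma B q.1.1.1 q.1.1.2 q.1.2 q.2.
pose l : seq M := map (fun q => (encA q.1, encB q.2))
  (enum {: ((state A * Sigma * state A * state A) * (state B * Sigma * state B * state B))%type}).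
have Hl0 : forall m : M, mem_l m l.
  move=> m; case: m => ma mb; case: ma => sa la La Ra; case: mb => sb lb Lb Rb.
  apply: (mem_l_map (fun q => (encA q.1, encB q.2)) (y := ((sa, la, La, Ra), (sb, lb, Lb, Rb)))).
  by rewrite mem_enum.
have Hl : forall m : M, (fun _ : M => @None dir) m = None -> mem_l m l by move=> m ?; apply: Hl0.
have [P [_ HP]] := Q_ind en nxt pr1 pr2 Hl.
case: (HP (init A, init B)) => [Hev|[tau [V W]]].
  exists (fun a b => P (a, b)) => bs dA dB [hA0 hA] [hB0 hB] HPb.
  apply: NNPP => nn.
  have accA : trans_seq_accepting dA by apply: NNPP => na; apply: nn; left.
  have accB : trans_seq_accepting dB by apply: NNPP => na; apply: nn; right.
  apply: (Hev (fun i => (dA i, dB i)) (fun i => (tsrc (dA i), tsrc (dB i)))).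
  - by rewrite /= hA0 hB0.
  - move=> i; have [dlA [lA sA]] := hA i; have [dlB [lB sB]] := hB i.
    split; first by split=> //=; rewrite lA lB.
    by rewrite /= HPb sA sB /nxt; case: (bs i).2.
  - by split.
pose t (w : seq dir) := tlet (tau (rev w)).1.
pose rA (w : seq dir) := (pos nxt (init A, init B) tau (rev w)).1.
pose rB (w : seq dir) := (pos nxt (init A, init B) tau (rev w)).2.
have Ven : forall w, en (pos nxt (init A, init B) tau (rev w)) (tau (rev w)).
  by move=> w; apply: V; apply: cons_none.
have Wb : forall beta : nat -> dir,
    cond pr1 pr2 (fun n => pos nxt (init A, init B) tau (rev (mkseq beta n))).
  move=> beta; apply: W; first by [].
  by move=> n; exists (beta n); rewrite mkseqS rev_rcons.
apply: False_ind; apply: (Hdis t); split.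
- exists rA; split; last by move=> beta; case: (Wb beta).
  split=> // w; rewrite /rA !rev_rcons /=.
  by case: (Ven w) => <- _ ? _ _.
- exists rB; split; last by move=> beta; case: (Wb beta).
  split=> // w; rewrite /rB /t !rev_rcons /=.
  by case: (Ven w) => _ <- _ ? ->.
Qed.
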